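(* Let $S$ be a semigroup with finite $\mathcal{R}$-height, and let $A$ be a left ideal of $S$. Let $n$ be the maximum length of a chain of $\mathcal{R}$-classes of $S$ each of which intersects $A$. Then $\mathrm{H}_{\mathcal{R}}(A)\leq 2n$.
   Context: For a semigroup $S$, $S^1$ denotes $S$ with an identity adjoined if necessary. Green's preorder: $a\leq_{\mathcal{R}} b$ iff $aS^1\subseteq bS^1$; $\mathcal{R}$ is the associated equivalence. $\mathcal{R}$-classes are ordered by $R_a\leq R_b$ iff $a\leq_{\mathcal{R}} b$, and the $\mathcal{R}$-height $\mathrm{H}_{\mathcal{R}}(S)$ is the supremum of the cardinalities of chains of $\mathcal{R}$-classes. A left ideal is a non-empty subset $A$ with $SA\subseteq A$; $\mathrm{H}_{\mathcal{R}}(A)$ is computed in the semigroup $A$ itself. *)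

(* Defs.v *)
From Stdlib Require Import Arith.

Definition associative_op {T : Type} (mul : T -> T -> T) : Prop :=
  forall a b c, mul a (mul b c) = mul (mul a b) c.

Definition left_ideal {T : Type} (mul : T -> T -> T) (A : T -> Prop) : Prop :=
  (exists a, A a) /\ (forall s a, A a -> A (mul s a)).

(* x ∈ a X^1, computed inside the (sub)semigroup with carrier X:
   x = a, or x = a s for some s ∈ X. *)
Definition in_princ_right {T : Type} (mul : T -> T -> T) (X : T -> Prop)
  (a x : T) : Prop :=
  x = a \/ exists s, X s /\ x = mul a s.

Definition Rle {T : Type} (mul : T -> T -> T) (X : T -> Prop) (a b : T) : Prop :=
  forall x, in_princ_right mul X a x -> in_princ_right mul X b x.

Definition Rlt {T : Type} (mul : T -> T -> T) (X : T -> Prop) (a b : T) : Prop :=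
  Rle mul X a b /\ ~ Rle mul X b a.

(* Distinct R-classes of a chain are
   strictly ordered, so this is exactly a chain of R-classes of cardinality k
   each of which meets P. *)
Definition R_chain {T : Type} (mul : T -> T -> T) (X P : T -> Prop) (k : nat)
  : Prop :=
  exists f : nat -> T,
    (forall i, i < k -> P (f i)) /\
    (forall i, S i < k -> Rlt mul X (f i) (f (S i))).

(* H_R(X) <= N (as a natural number): every chain of R-classes has at most N
   elements.  (Since an infinite chain contains arbitrarily long finite ones,
   this is equivalent to the supremum of all chain cardinalities being <= N.) *)
Definition R_height_le {T : Type} (mul : T -> T -> T) (X : T -> Prop) (N : nat)
  : Prop :=
  forall k, R_chain mul X X k -> k <= N.

Definition finite_R_height {T : Type} (mul : T -> T -> T) (X : T -> Prop) : Prop :=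
  exists N, R_height_le mul X N.

(* Main.v *)
Require Import Defs.
From Stdlib Require Import Arith Lia.

Lemma Rle_trans {T} (mul : T -> T -> T) X a b c :
  Rle mul X a b -> Rle mul X b c -> Rle mul X a c.
Proof. unfold Rle; auto. Qed.

Lemma RleA_S {T} (mul : T -> T -> T) (Hassoc : associative_op mul) A a b :
  Rle mul A a b -> Rle mul (fun _ => True) a b.
Proof.
  intros H x Hx.
  assert (Ha : in_princ_right mul A b a) by (apply H; left; reflexivity).
  destruct Ha as [-> | [t [_ ->]]]; [exact Hx|].
  destruct Hx as [-> | [s [_ ->]]].
  - right; exists t; auto.
  - right; exists (mul t s); split; [exact I | symmetry; apply Hassoc].
Qed.

Lemma three {T} (mul : T -> T -> T) (Hassoc : associative_op mul) A
  (HA : left_ideal mul A) a b c :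
  Rlt mul A a b -> Rlt mul A b c -> Rle mul (fun _ => True) c a -> False.
Proof.
  intros [Hab Hba] [Hbc Hcb] Hca.
  assert (Hc : in_princ_right mul (fun _ => True) a c) by (apply Hca; left; reflexivity).
  destruct Hc as [-> | [s [_ ->]]].
  - apply Hba. exact Hbc.
  - assert (Hb : in_princ_right mul A (mul a s) b) by (apply Hbc; left; reflexivity).
    destruct Hb as [Hb | [u [Hu Hb]]].
    + apply Hcb. rewrite Hb. intros x Hx; exact Hx.
    + apply Hba. rewrite <- Hassoc in Hb.
      intros x [-> | [w [Hw ->]]].
      * right. exists (mul s u). split; [apply HA; auto | exact Hb].
      * right. exists (mul (mul s u) w). split; [apply HA; auto|].
        rewrite Hb. rewrite <- Hassoc. reflexivity.
Qed.

Theorem theorem3p8 (T : Type) (mul : T -> T -> T) (Hassoc : associative_op mul)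
  (HS : finite_R_height mul (fun _ => True))
  (A : T -> Prop) (HA : left_ideal mul A) (n : nat)
  (Hn_attained : R_chain mul (fun _ => True) A n)
  (Hn_max : forall k, R_chain mul (fun _ => True) A k -> k <= n) :
  R_height_le mul A (2 * n).
Proof.
  intros k [f [Hf Hc]].
  assert (Hm : R_chain mul (fun _ => True) A ((k + 1) / 2)).
  { exists (fun i => f (2 * i)). split.
    - intros i Hi. apply Hf.
      assert (2 * i < k).
      { assert (2 * ((k+1)/2) <= k + 1) by (apply Nat.Div0.mul_div_le). lia. }
      lia.
    - intros i Hi.
      assert (Hk : 2 * i + 2 < k).
      { assert (2 * ((k+1)/2) <= k + 1) by (apply Nat.Div0.mul_div_le). lia. }
      assert (H1 := Hc (2 * i) ltac:(lia)).
      assert (H2 := Hc (S (2 * i)) ltac:(lia)).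
      replace (2 * S i) with (S (S (2 * i))) by lia.
      split.
      + apply (RleA_S mul Hassoc A).
        eapply Rle_trans; [apply (proj1 H1) | apply (proj1 H2)].
      + intro H. exact (three mul Hassoc A HA _ _ _ H1 H2 H). }
  apply Hn_max in Hm.
  assert (k <= 2 * ((k + 1) / 2)).
  { assert (H := Nat.div_mod (k+1) 2 ltac:(lia)).
    assert (H' := Nat.mod_upper_bound (k+1) 2 ltac:(lia)). lia. }
  lia.
Qed.
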